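(* Let $P, Q \subseteq \mathbb{R}^d$ be semi-rational polytopes, each of codimension $0$ or $1$. Suppose that $L_{P+w}(s) = L_{Q+w}(s)$ for all integer vectors $w \in \mathbb{Z}^d$ and all real $s > 0$. Then $P = Q$.
   Context: For a polytope $P \subseteq \mathbb{R}^d$ and real $s \ge 0$, the real Ehrhart function is $L_P(s) = \#(sP \cap \mathbb{Z}^d)$, where $sP = \{sx : x \in P\}$. A polytope $P \subseteq \mathbb{R}^d$ is semi-rational if it can be written as $P = \bigcap_{i=1}^n \{x \in \mathbb{R}^d : \langle a_i, x\rangle \le b_i\}$ with all $a_i \in \mathbb{Z}^d$ and all $b_i \in \mathbb{R}$ arbitrary. *)

(* Defs.v *)
From Stdlib Require Import Reals ZArith List.
From mathcomp Require Import ssreflect ssrbool ssrfun eqtype ssrnat seq fintype bigop.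

Set Implicit Arguments.
Unset Strict Implicit.

Open Scope R_scope.

Definition pt (d : nat) := 'I_d -> R.

Definition zdot (d : nat) (a : 'I_d -> Z) (x : pt d) : R :=
  \big[Rplus/0]_(i < d) (IZR (a i) * x i).

Definition bounded (d : nat) (P : pt d -> Prop) : Prop :=
  exists M : R, forall x, P x -> forall i, Rabs (x i) <= M.

Definition semi_rational_polytope (d : nat) (P : pt d -> Prop) : Prop :=
  (exists H : list (('I_d -> Z) * R),
      forall x, P x <-> Forall (fun h => zdot h.1 x <= h.2) H)
  /\ bounded P.

Definition aff_indep (d k : nat) (p : 'I_k -> pt d) : Prop :=
  forall lam : 'I_k -> R,
    \big[Rplus/0]_(i < k) lam i = 0 ->
    (forall j : 'I_d, \big[Rplus/0]_(i < k) (lam i * p i j) = 0) ->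
    forall i, lam i = 0.

(* codim P = d - dim(aff P) is 0 or 1, i.e. dim(aff P) >= d - 1, i.e.
   P contains d affinely independent points (with dim(empty) = -1). *)
Definition codim_le1 (d : nat) (P : pt d -> Prop) : Prop :=
  exists p : 'I_d -> pt d, (forall i, P (p i)) /\ aff_indep p.

Definition translate (d : nat) (P : pt d -> Prop) (w : 'I_d -> Z) : pt d -> Prop :=
  fun x => P (fun i => x i - IZR (w i)).

Definition in_dilate (d : nat) (P : pt d -> Prop) (s : R) (z : list Z) : Prop :=
  length z = d /\
  exists x : pt d, P x /\ forall i : 'I_d, IZR (List.nth (nat_of_ord i) z 0%Z) = s * x i.

(* ehrhart P s n  :<->  L_P(s) = #(sP ∩ Z^d) = n. *)
Definition ehrhart (d : nat) (P : pt d -> Prop) (s : R) (n : nat) : Prop :=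
  exists l : list (list Z),
    NoDup l /\ length l = n /\ forall z, List.In z l <-> in_dilate P s z.

(* Main.v *)
Require Import Defs.
From Stdlib Require Import Reals ZArith List Lra Lia Classical FunctionalExtensionality.
From mathcomp Require Import ssreflect ssrbool ssrfun eqtype ssrnat seq fintype bigop.
From mathcomp Require Import all_boot all_order all_algebra.
From mathcomp Require Import Rstruct.

Open Scope R_scope.

Section F1.
Import Order.TTheory GRing.Theory Num.Theory.
Local Open Scope ring_scope.

Lemma F1m (d : nat) (p : 'I_d -> 'I_d -> R) (j0 : 'I_d) (a b : 'I_d -> R) :
  (forall lam : 'I_d -> R, \sum_(i < d) lam i = 0 ->
    (forall j : 'I_d, \sum_(i < d) (lam i * p i j) = 0) -> forall i, lam i = 0) ->
  (exists i, a i != 0) ->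
  (forall j, \sum_i a i * p j i = \sum_i a i * p j0 i) ->
  (forall j, \sum_i b i * p j i = \sum_i b i * p j0 i) ->
  exists mu, forall i, b i = mu * a i.
Proof.
move=> indep [i1 ai1] Ha Hb.
set A2 := \sum_i a i * a i.
have A2pos : 0 < A2.
  rewrite /A2 (bigD1 i1) //= ltr_pwDl //.
    by rewrite lt0r mulf_neq0 // -expr2 sqr_ge0.
  by apply: sumr_ge0 => i _; rewrite -expr2 sqr_ge0.
have Haz : forall j, \sum_i a i * (p j i - p j0 i) = 0.
  move=> j; rewrite (eq_bigr (fun i => a i * p j i - a i * p j0 i)); last by move=> i _; rewrite mulrBr.
  by rewrite sumrB Ha subrr.
have Hbz : forall j, \sum_i b i * (p j i - p j0 i) = 0.
  move=> j; rewrite (eq_bigr (fun i => b i * p j i - b i * p j0 i)); last by move=> i _; rewrite mulrBr.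
  by rewrite sumrB Hb subrr.
pose N : 'M[R]_d := \matrix_(j, i) (if j == j0 then a i else p j i - p j0 i).
have Nfree : row_free N.
  apply: inj_row_free => v Hv.
  have Hcol : forall i, \sum_j v 0 j * N j i = 0.
    move=> i; have := congr1 (fun M : 'rV[R]_d => M 0 i) Hv; rewrite !mxE. by move=> ->.
  have u0 : v 0 j0 = 0.
    have : \sum_i a i * (\sum_j v 0 j * N j i) = 0.
      by rewrite big1 // => i _; rewrite Hcol mulr0.
    rewrite (eq_bigr (fun i => \sum_j a i * (v 0 j * N j i))); last by move=> i _; rewrite mulr_sumr.
    rewrite exchange_big /= (bigD1 j0) //= [X in _ + X]big1 ?addr0.
      rewrite (eq_bigr (fun i => v 0 j0 * (a i * a i))); last first.
        by move=> i _; rewrite /N mxE eqxx mulrCA.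
      rewrite -mulr_sumr => /eqP; rewrite mulf_eq0 => /orP [/eqP //|].
      by move=> /eqP A0; move: A2pos; rewrite /A2 A0 ltxx.
    move=> j /negbTE nj.
    rewrite (eq_bigr (fun i => v 0 j * (a i * (p j i - p j0 i)))); last first.
      by move=> i _; rewrite /N mxE nj mulrCA.
    by rewrite -mulr_sumr Haz mulr0.
  pose lam j := if j == j0 then - \sum_(k | k != j0) v 0 k else v 0 j.
  have lam0 : forall j, lam j = 0.
    apply: indep.
      rewrite /lam (bigD1 j0) //= eqxx.
      rewrite [X in _ + X](eq_bigr (fun k => v 0 k)); first by rewrite addNr.
      by move=> k /negbTE ->.
    move=> i.
    rewrite (bigD1 j0) //= /lam eqxx.
    rewrite [X in _ + X](eq_bigr (fun k => v 0 k * p k i)); last by move=> k /negbTE ->.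
    rewrite mulNr mulr_suml addrC -sumrB.
    apply: etrans (Hcol i); rewrite [RHS](bigD1 j0) //= u0 mul0r add0r.
    by apply: eq_bigr => k /negbTE nk; rewrite /N mxE nk mulrBr.
  apply/matrixP => i j; rewrite !mxE ord1.
  case: (eqVneq j j0) => [->|nj]; first by rewrite u0.
  by have := lam0 j; rewrite /lam (negbTE nj).
have Nunit : N \in unitmx by rewrite -row_free_unit.
pose mu := (\sum_i a i * b i) / A2.
pose c : 'cV[R]_d := \col_i (b i - mu * a i).
have Nc : N *m c = 0.
  apply/matrixP => j k; rewrite mxE.
  case: (eqVneq j j0) => [->|nj].
    rewrite (eq_bigr (fun i => a i * b i - mu * (a i * a i))); last first.
      by move=> i _; rewrite /N !mxE eqxx mulrBr mulrCA.
    rewrite sumrB -mulr_sumr -/A2 /mu divfK ?subrr ?(lt0r_neq0 A2pos) //; first by rewrite mxE.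
  rewrite (eq_bigr (fun i => b i * (p j i - p j0 i) - mu * (a i * (p j i - p j0 i)))); last first.
    by move=> i _; rewrite /N !mxE (negbTE nj) mulrBr [_ * b i]mulrC mulrCA [_ * a i]mulrC.
  by rewrite sumrB -mulr_sumr Haz Hbz mulr0 subrr mxE.
have c0 : c = 0 by rewrite -(mulKmx Nunit c) Nc mulmx0.
exists mu => i.
by have := congr1 (fun M : 'cV[R]_d => M i 0) c0; rewrite !mxE => /eqP; rewrite subr_eq0 => /eqP.
Qed.
End F1.


Section MC.
Import Order.TTheory GRing.Theory Num.Theory.
Local Open Scope ring_scope.
Lemma mc_exch (d : nat) (a : 'I_d -> R) (p : 'I_d -> 'I_d -> R) (k : R) :
  \sum_i a i * (k * \sum_j p j i) = k * \sum_j \sum_i a i * p j i.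
Proof.
rewrite (eq_bigr (fun i => \sum_j k * (a i * p j i))); last first.
  by move=> i _; rewrite mulr_sumr mulr_sumr; apply: eq_bigr => j _; rewrite mulrCA.
rewrite exchange_big [RHS]mulr_sumr; apply: eq_bigr => j _; by rewrite mulr_sumr.
Qed.
Lemma mc_psum0 (d : nat) (g : 'I_d -> R) :
  (forall j, 0 <= g j) -> \sum_j g j = 0 -> forall j, g j = 0.
Proof.
move=> g0 H j; apply: (psumr_eq0P (P := xpredT)) => //.
Qed.
End MC.


Lemma big_lin (n : nat) (al be : R) (F G : 'I_n -> R) :
  \big[Rplus/0]_(i < n) (al * F i + be * G i) =
  al * \big[Rplus/0]_(i < n) F i + be * \big[Rplus/0]_(i < n) G i.
Proof.
elim/big_rec3: _ => /=; first ring.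
move=> i s1 s2 s3 _ ->; ring.
Qed.

Lemma big_bound (n : nat) (F B : 'I_n -> R) :
  (forall i, Rabs (F i) <= B i) ->
  Rabs (\big[Rplus/0]_(i < n) F i) <= \big[Rplus/0]_(i < n) B i.
Proof.
move=> HB; elim/big_rec2: _ => /=; first by rewrite Rabs_R0; lra.
move=> i s1 s2 _ H; eapply Rle_trans; first exact: Rabs_triang.
have := HB i; lra.
Qed.

Lemma big_le (n : nat) (F B : 'I_n -> R) :
  (forall i, F i <= B i) ->
  \big[Rplus/0]_(i < n) F i <= \big[Rplus/0]_(i < n) B i.
Proof.
move=> HB; elim/big_rec2: _ => /=; first lra.
move=> i s1 s2 _ H; have := HB i; lra.
Qed.

Lemma big_constR (n : nat) (B : R) :
  \big[Rplus/0]_(i < n) B = INR n * B.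
Proof.
elim: n => [|n IH]; first by rewrite big_ord0 /=; ring.
rewrite big_ord_recr IH S_INR /=; ring.
Qed.

Lemma big_zero (n : nat) (F : 'I_n -> R) : (forall i, F i = 0) ->
  \big[Rplus/0]_(i < n) F i = 0.
Proof. move=> H; elim/big_rec: _ => //= i s _ ->; rewrite H; ring. Qed.

Lemma exch (d : nat) (a : 'I_d -> R) (p : 'I_d -> 'I_d -> R) (k : R) :
  \big[Rplus/0]_(i < d) (a i * (k * \big[Rplus/0]_(j < d) p j i)) =
  k * \big[Rplus/0]_(j < d) \big[Rplus/0]_(i < d) (a i * p j i).
Proof. exact: mc_exch. Qed.

Lemma psum0 (d : nat) (g : 'I_d -> R) :
  (forall j, 0 <= g j) -> \big[Rplus/0]_(j < d) g j = 0 -> forall j, g j = 0.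
Proof.
move=> H1 H2; apply: mc_psum0 => //.
by move=> j; apply/RleP; apply: H1.
Qed.

Set Implicit Arguments.
Unset Strict Implicit.

Definition Asum (d : nat) (a : 'I_d -> Z) : R := \big[Rplus/0]_(i < d) Rabs (IZR (a i)).

Lemma Asum_ge0 d (a : 'I_d -> Z) : 0 <= Asum a.
Proof.
rewrite /Asum; elim/big_rec: _ => /=; first lra.
move=> i s _ H; have := Rabs_pos (IZR (a i)); lra.
Qed.

Lemma zdot_ext d (a : 'I_d -> Z) x y : (forall i, x i = y i) -> zdot a x = zdot a y.
Proof. by move=> H; rewrite /zdot; apply: eq_bigr => i _; rewrite H. Qed.

Lemma zdot_lin d (a : 'I_d -> Z) x y al be :
  zdot a (fun i => al * x i + be * y i) = al * zdot a x + be * zdot a y.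
Proof.
rewrite /zdot -big_lin; apply: eq_bigr => i _; ring.
Qed.

Lemma zdot_bound d (a : 'I_d -> Z) x eta :
  (forall i, Rabs (x i) <= eta) -> Rabs (zdot a x) <= eta * Asum a.
Proof.
move=> H; rewrite /zdot /Asum.
have -> : eta * \big[Rplus/0]_(i < d) Rabs (IZR (a i)) =
          \big[Rplus/0]_(i < d) (eta * Rabs (IZR (a i)) + 0 * Rabs (IZR (a i))).
  by rewrite big_lin; ring.
apply: big_bound => i; rewrite Rabs_mult.
have := H i; have := Rabs_pos (IZR (a i)); have := Rabs_pos (x i); nra.
Qed.

Lemma term_le_sum d (F : 'I_d -> R) j : (forall i, 0 <= F i) ->
  F j <= \big[Rplus/0]_(i < d) F i.
Proof.
move=> H; rewrite (bigD1 j) //=.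
change (F j <= F j + \big[Rplus/0]_(i < d | i != j) F i).
suff : 0 <= \big[Rplus/0]_(i < d | i != j) F i by lra.
elim/big_rec: _ => /=; first lra.
move=> i s _ Hs; have := H i; lra.
Qed.

Lemma up_bounds (y : R) : y < IZR (up y) /\ IZR (up y) - 1 <= y.
Proof. have [h1 h2] := archimed y; lra. Qed.

Lemma approx_core d (a : 'I_d -> Z) (u : pt d) eta : 0 < eta ->
  exists (tau : R) (z w : 'I_d -> Z),
    (forall i, Rabs (tau * IZR (z i) + IZR (w i) - u i) < eta) /\
    zdot a (fun i => tau * IZR (z i) + IZR (w i)) = zdot a u.
Proof.
move=> eta0.
case: (classic (exists i0, a i0 <> Z0)) => [[i0 ai0]|Hz]; last first.
  have a0 : forall i, a i = Z0.
    by move=> i; apply: NNPP => hi; apply: Hz; exists i.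
  have zd0 : forall x, zdot a x = 0.
    by move=> x; apply: big_zero => i; rewrite a0; ring.
  pose N := 1 / eta + 1.
  have N0 : 0 < N by rewrite /N; have := Rdiv_lt_0_compat 1 eta Rlt_0_1 eta0; lra.
  have Neta : 1 < N * eta.
    rewrite /N Rmult_plus_distr_r /Rdiv Rmult_assoc Rinv_l; lra.
  exists (/ N), (fun i => Z.sub (up (N * u i)) (Zpos xH)), (fun _ => Z0); split; last by rewrite !zd0.
  move=> i; rewrite minus_IZR.
  have [h1 h2] := up_bounds (N * u i).
  have -> : / N * (IZR (up (N * u i)) - 1) + 0 - u i = / N * (IZR (up (N * u i)) - 1 - N * u i).
    by field; lra.
  rewrite Rabs_mult Rabs_inv (Rabs_pos_eq N); last lra.
  have hN : / N < eta.
    apply: (Rmult_lt_reg_l N); first lra.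
    by rewrite Rinv_r; lra.
  have : Rabs (IZR (up (N * u i)) - 1 - N * u i) <= 1 by apply: Rabs_le; lra.
  have := Rinv_0_lt_compat N N0; nra.
pose w0 : 'I_d -> Z := if Req_EM_T (zdot a u) 0 then (fun i => if i == i0 then (Zpos xH) else Z0)
                       else (fun _ => Z0).
pose v i := u i - IZR (w0 i).
pose sg := zdot a v.
have sg0 : sg <> 0.
  have hv : sg = zdot a u - zdot a (fun i => IZR (w0 i)).
    have e1 : forall i, v i = 1 * u i + (-1) * IZR (w0 i) by move=> i; rewrite /v; ring.
    rewrite /sg (zdot_ext a e1) zdot_lin; ring.
  rewrite hv /w0; case: Req_EM_T => h.
    have -> : zdot a (fun i => IZR (if i == i0 then (Zpos xH) else Z0)) = IZR (a i0).
      rewrite /zdot (bigD1 i0) //= eqxx big1 /=; first ring.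
      by move=> i /negbTE ->; ring.
    rewrite h => e; apply: ai0; apply: eq_IZR; lra.
  have -> : zdot a (fun _ => IZR 0) = 0 by apply: big_zero => i; ring.
  lra.
pose Aa := Asum a.
have Aa0 : 0 <= Aa := Asum_ge0 a.
pose V := \big[Rplus/0]_(i < d) Rabs (v i).
have Vi : forall i, Rabs (v i) <= V.
  move=> i; rewrite /V; apply: (term_le_sum (F:=fun i => Rabs (v i))) => j; exact: Rabs_pos.
have V0 : 0 <= V by have := Vi i0; have := Rabs_pos (v i0); lra.
have asg : 0 < Rabs sg by apply: Rabs_pos_lt.
pose K := (Aa * V + Rabs sg) / eta.
have K0 : 0 < K.
  rewrite /K; apply: Rdiv_lt_0_compat => //; have := Rmult_le_pos _ _ Aa0 V0; lra.
pose N := (K + Aa + 1) / Rabs sg.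
have N0 : 0 < N by rewrite /N; apply: Rdiv_lt_0_compat; lra.
have NS : N * Rabs sg = K + Aa + 1 by rewrite /N; field; lra.
pose z i := Z.sub (up (N * v i)) (Zpos xH).
pose e i := IZR (z i) - N * v i.
have ebd : forall i, Rabs (e i) <= 1.
  move=> i; rewrite /e /z minus_IZR; have [h1 h2] := up_bounds (N * v i).
  apply: Rabs_le; lra.
pose Sz := zdot a (fun i => IZR (z i)).
pose Se := zdot a e.
have hSz : Sz = N * sg + Se.
  have e2 : forall i, IZR (z i) = N * v i + 1 * e i by move=> i; rewrite /e; ring.
  rewrite /Sz (zdot_ext a e2) zdot_lin /sg /Se; ring.
have hSe : Rabs Se <= Aa.
  have := zdot_bound a ebd; rewrite -/Se -/Aa; lra.
have Szbig : K + 1 <= Rabs Sz.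
  rewrite hSz.
  have h1 : Rabs (N * sg) = K + Aa + 1 by rewrite Rabs_mult (Rabs_pos_eq N); lra.
  have := Rabs_triang_inv (N * sg) (- Se); rewrite Rabs_Ropp /Rminus Ropp_involutive; lra.
have Sz0 : Sz <> 0 by move=> h; rewrite h Rabs_R0 in Szbig; lra.
exists (sg / Sz), z, w0; split.
  move=> i.
  have -> : sg / Sz * IZR (z i) + IZR (w0 i) - u i = (sg * e i - Se * v i) / Sz.
    have hz : IZR (z i) = N * v i + e i by rewrite /e; ring.
    have hu : u i = v i + IZR (w0 i) by rewrite /v; ring.
    have h1 : sg / Sz * IZR (z i) + IZR (w0 i) - u i = (sg * IZR (z i) - Sz * v i) / Sz.
      by rewrite hu; field; exact Sz0.
    rewrite h1; f_equal; rewrite hz hSz; ring.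
  rewrite /Rdiv Rabs_mult Rabs_inv.
  have hnum : Rabs (sg * e i - Se * v i) <= Rabs sg + Aa * V.
    eapply Rle_trans; first exact: Rabs_triang.
    rewrite Rabs_Ropp !Rabs_mult.
    have := ebd i; have := Vi i; have := Rabs_pos (e i); have := Rabs_pos (v i);
    have := Rabs_pos Se; nra.
  have hK : (Rabs sg + Aa * V) = K * eta by rewrite /K; field; lra.
  apply: (Rmult_lt_reg_r (Rabs Sz)); first lra.
  rewrite Rmult_assoc Rinv_l; last lra.
  have := Rmult_le_pos _ _ Aa0 V0; nra.
have hy : forall i, sg / Sz * IZR (z i) + IZR (w0 i) = (sg / Sz) * IZR (z i) + 1 * IZR (w0 i).
  by move=> i; ring.
rewrite (zdot_ext a hy) zdot_lin -/Sz.
have hu : forall i, u i = 1 * v i + 1 * IZR (w0 i) by move=> i; rewrite /v; ring.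
rewrite (zdot_ext a hu) zdot_lin -/sg; field; exact Sz0.
Qed.


Definition reach d (R0 : R) (y : pt d) :=
  exists (w z : 'I_d -> Z) (Rr : R), R0 < Rr /\ forall i, y i = Rr * IZR (z i) - IZR (w i).

Lemma approx d (a : 'I_d -> Z) (u : pt d) eta R0 : 0 < eta ->
  exists y, reach R0 y /\ (forall i, Rabs (y i - u i) < eta) /\ zdot a y = zdot a u.
Proof.
move=> eta0; have [tau [z [w [H1 H2]]]] := approx_core a u eta0.
exists (fun i => tau * IZR (z i) + IZR (w i)); split => //.
pose K0 := up (R0 - tau).
have [hk _] := up_bounds (R0 - tau).
exists (fun i => Z.sub (Z.mul K0 (z i)) (w i)), z, (tau + IZR K0); split; first by rewrite /K0; lra.
move=> i; rewrite minus_IZR mult_IZR; ring.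
Qed.

Lemma zdot_scale d (a b : 'I_d -> Z) mu y :
  (forall i, IZR (b i) = mu * IZR (a i)) -> zdot b y = mu * zdot a y.
Proof.
move=> H; rewrite /zdot.
have -> : mu * \big[Rplus/0]_(i < d) (IZR (a i) * y i) =
   \big[Rplus/0]_(i < d) (mu * (IZR (a i) * y i) + 0 * (IZR (a i) * y i)) by rewrite big_lin; ring.
apply: eq_bigr => i _; rewrite H; ring.
Qed.

Lemma list_eta (T : Type) (l : list T) (Q : T -> R -> Prop) :
  (forall h e e', 0 < e' <= e -> Q h e -> Q h e') ->
  (forall h, In h l -> exists e, 0 < e /\ Q h e) ->
  exists e, 0 < e /\ forall h, In h l -> Q h e.
Proof.
move=> Hd; elim: l => [|h l IH] Hl.
  by exists 1; split => //; lra.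
have [e1 [e10 He1]] := Hl h (or_introl erefl).
have [e2 [e20 He2]] := IH (fun h' H' => Hl h' (or_intror H')).
exists (Rmin e1 e2); split; first by apply: Rmin_glb_lt.
move=> h' [<-|Hin].
  apply: (Hd _ e1) => //; split; [by apply: Rmin_glb_lt | exact: Rmin_l].
apply: (Hd _ e2); last exact: He2.
split; [by apply: Rmin_glb_lt | exact: Rmin_r].
Qed.

Lemma Forall_In (T : Type) (f : T -> Prop) l : Forall f l <-> (forall h, In h l -> f h).
Proof. exact: Forall_forall. Qed.

Lemma density d (P : pt d -> Prop) (Hl : list (('I_d -> Z) * R)) M (p : 'I_d -> pt d)
  (x : pt d) eps R0 :
  (forall y, P y <-> Forall (fun h => zdot h.1 y <= h.2) Hl) ->
  (forall y, P y -> forall i, Rabs (y i) <= M) ->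
  (forall j, P (p j)) -> aff_indep p -> P x -> 0 < eps ->
  exists y, P y /\ (forall i, Rabs (y i - x i) < eps) /\ reach R0 y.
Proof.
move=> HP HM Pp ind Px eps0.
have HPi : forall y, P y -> forall h, In h Hl -> zdot h.1 y <= h.2.
  by move=> y Py; apply/Forall_In/HP.
case: (Nat.eq_dec d O) => [d0|dn0].
  subst d; exists x; split => //; split; first by case=> ? //.
  exists (fun _ => Z0), (fun _ => Z0), (R0 + 1); split; first lra.
  by case=> ? //.
have dpos : (0 < d)%N by rewrite lt0n; apply/eqP.
pose j0 : 'I_d := Ordinal dpos.
have Ipos : 0 < INR d by apply: lt_0_INR; lia.
pose k := / INR d.
have kd : k * INR d = 1 by rewrite /k Rinv_l //; lra.
have k0 : 0 < k by apply: Rinv_0_lt_compat.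
pose c i := k * \big[Rplus/0]_(j < d) p j i.
have M0 : 0 <= M by have := HM x Px j0; have := Rabs_pos (x j0); lra.
have cM : forall i, Rabs (c i) <= M.
  move=> i; rewrite /c Rabs_mult (Rabs_pos_eq k); last lra.
  have : Rabs (\big[Rplus/0]_(j < d) p j i) <= INR d * M.
    rewrite -big_constR; apply: big_bound => j; exact: HM.
  move=> h; apply: (Rle_trans _ (k * (INR d * M))); first by apply: Rmult_le_compat_l; lra.
  rewrite -Rmult_assoc kd; lra.
have zc : forall a : 'I_d -> Z, zdot a c = k * \big[Rplus/0]_(j < d) zdot a (p j).
  move=> a; rewrite /zdot /c; exact: exch.
have cle : forall h, In h Hl -> zdot h.1 c <= h.2.
  move=> h hin; rewrite zc.
  have : \big[Rplus/0]_(j < d) zdot h.1 (p j) <= INR d * h.2.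
    rewrite -big_constR; apply: big_le => j; exact: HPi.
  move=> hh; apply: (Rle_trans _ (k * (INR d * h.2))); first by apply: Rmult_le_compat_l; lra.
  rewrite -Rmult_assoc kd; lra.
pose lam := Rmin (1/2) (eps / (4 * (M + 1))).
have lam0 : 0 < lam.
  apply: Rmin_glb_lt; first lra.
  apply: Rdiv_lt_0_compat => //; lra.
have lam1 : lam <= 1/2 by exact: Rmin_l.
have lam2 : lam * (4 * (M + 1)) <= eps.
  have h := Rmin_r (1/2) (eps / (4 * (M + 1))).
  have -> : eps = eps / (4 * (M + 1)) * (4 * (M + 1)) by field; lra.
  apply: Rmult_le_compat_r => //; lra.
pose u i := x i + lam * (c i - x i).
have ux : forall i, Rabs (u i - x i) < eps / 2.
  move=> i; rewrite /u.
  have -> : x i + lam * (c i - x i) - x i = lam * (c i - x i) by ring.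
  rewrite Rabs_mult (Rabs_pos_eq lam); last lra.
  have h1 : Rabs (c i - x i) <= 2 * M.
    have := Rabs_triang (c i) (- x i); rewrite Rabs_Ropp.
    have := cM i; have := HM x Px i; rewrite /Rminus; lra.
  have := Rabs_pos (c i - x i); nra.
have zu : forall a : 'I_d -> Z, zdot a u = (1 - lam) * zdot a x + lam * zdot a c.
  by move=> a; rewrite -zdot_lin; apply: zdot_ext => i; rewrite /u; ring.
have ule : forall h, In h Hl -> zdot h.1 u <= h.2.
  move=> h hin; rewrite zu; have := cle h hin; have := HPi x Px h hin; nra.
have tight : forall h, In h Hl -> zdot h.1 u = h.2 -> forall j, zdot h.1 (p j) = h.2.
  move=> h hin hu.
  have hc : zdot h.1 c = h.2.
    move: hu; rewrite zu; have := cle h hin; have := HPi x Px h hin; nra.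
  have hs : \big[Rplus/0]_(j < d) (1 * h.2 + (-1) * zdot h.1 (p j)) = 0.
    rewrite big_lin big_constR; move: hc; rewrite zc => hc.
    have -> : \big[Rplus/0]_(j < d) zdot h.1 (p j) = INR d * h.2.
      apply: (Rmult_eq_reg_l k); last lra.
      by rewrite hc -Rmult_assoc kd; ring.
    ring.
  have g0 : forall j', 0 <= 1 * h.2 + (-1) * zdot h.1 (p j').
    by move=> j'; have := HPi _ (Pp j') h hin; lra.
  move=> j; have := @psum0 d _ g0 hs j; lra.
pose Tgt := exists h, In h Hl /\ zdot h.1 u = h.2 /\ exists i, h.1 i <> Z0.
have [a Ha] : exists a : 'I_d -> Z,
    forall h, In h Hl -> zdot h.1 u = h.2 -> (exists i, h.1 i <> Z0) ->
    exists mu, forall i, IZR (h.1 i) = mu * IZR (a i).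
  case: (classic Tgt) => [[h0 [h0in [h0t [i0 hi0]]]]|nT]; last first.
    exists (fun _ => Z0) => h hin ht hn; exfalso; apply: nT; exists h; split => //.
  exists h0.1 => h hin ht hn.
  apply: (@F1m d p j0).
  - exact: ind.
  - by exists i0; apply/eqP => /eq_IZR.
  - move=> j; have e1 := tight h0 h0in h0t j; have e2 := tight h0 h0in h0t j0.
    by rewrite /zdot in e1 e2; rewrite e1 e2.
  - move=> j; have e1 := tight h hin ht j; have e2 := tight h hin ht j0.
    by rewrite /zdot in e1 e2; rewrite e1 e2.
have [eta [eta0 Heta]] : exists e, 0 < e /\ forall h, In h Hl ->
    zdot h.1 u < h.2 -> e * Asum h.1 < h.2 - zdot h.1 u.
  apply: (list_eta (Q := fun h e => zdot h.1 u < h.2 -> e * Asum h.1 < h.2 - zdot h.1 u)).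
    move=> h e e' [he0 hee] H1 H2; have := H1 H2; have := Asum_ge0 h.1; nra.
  move=> h _; case: (Rlt_dec (zdot h.1 u) h.2) => hs; last first.
    by exists 1; split; [lra | move=> h'; contradiction].
  have A0 := Asum_ge0 h.1.
  exists ((h.2 - zdot h.1 u) / (Asum h.1 + 1)); split.
    by apply: Rdiv_lt_0_compat; lra.
  move=> _.
  have e1 : (h.2 - zdot h.1 u) / (Asum h.1 + 1) * Asum h.1 =
            (h.2 - zdot h.1 u) - (h.2 - zdot h.1 u) / (Asum h.1 + 1) by field; lra.
  have e2 : 0 < (h.2 - zdot h.1 u) / (Asum h.1 + 1) by apply: Rdiv_lt_0_compat; lra.
  lra.
pose eta' := Rmin eta (eps / 2).
have eta'0 : 0 < eta' by apply: Rmin_glb_lt; lra.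
have [y [ry [yu ya]]] := approx a u R0 eta'0.
exists y; split; last split => //.
  apply/HP/Forall_In => h hin.
  have hle := ule h hin.
  case: (Rlt_dec (zdot h.1 u) h.2) => hs.
    have hd : zdot h.1 y - zdot h.1 u = zdot h.1 (fun i => 1 * y i + (-1) * u i).
      by rewrite zdot_lin; ring.
    have hb : Rabs (zdot h.1 (fun i => 1 * y i + (-1) * u i)) <= eta' * Asum h.1.
      apply: zdot_bound => i.
      have -> : 1 * y i + -1 * u i = y i - u i by ring.
      exact: Rlt_le (yu i).
    have := Heta h hin hs; have := Rmin_l eta (eps / 2); have := Asum_ge0 h.1.
    rewrite -/eta' => A0 e1 e2.
    have : eta' * Asum h.1 <= eta * Asum h.1 by apply: Rmult_le_compat_r.
    have := Rle_abs (zdot h.1 (fun i => 1 * y i + (-1) * u i)); lra.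
  have ht : zdot h.1 u = h.2 by lra.
  case: (classic (exists i, h.1 i <> Z0)) => hn.
    have [mu hmu] := Ha h hin ht hn.
    rewrite (zdot_scale y hmu) ya -(zdot_scale u hmu); lra.
  have z0 : forall (v : pt d), zdot h.1 v = 0.
    move=> v; apply: big_zero => i.
    have -> : h.1 i = Z0 by apply: NNPP => hi; apply: hn; exists i.
    ring.
  rewrite z0; rewrite z0 in ht; lra.
move=> i.
have := Rabs_triang (y i - u i) (u i - x i).
have -> : y i - u i + (u i - x i) = y i - x i by ring.
have := yu i; have := ux i; have := Rmin_r eta (eps / 2); rewrite -/eta'; lra.
Qed.


Lemma lnth_nth (T : Type) (l : list T) n x0 : List.nth n l x0 = nth x0 l n.
Proof. by elim: l n => [|a l IH] [|n] //=. Qed.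

Lemma llen_size (T : Type) (l : list T) : List.length l = size l.
Proof. by elim: l => //= a l ->. Qed.

Lemma IZR_small (m : Z) : Rabs (IZR m) < 1 -> m = Z0.
Proof.
move=> h; have [h1 h2] := Rabs_def2 _ _ h.
have e1 : Z.lt (Zneg xH) m by apply: lt_IZR; exact: h2.
have e2 : Z.lt m (Zpos xH) by apply: lt_IZR; exact: h1.
lia.
Qed.

Lemma half d (P Q : pt d -> Prop) :
  semi_rational_polytope P -> semi_rational_polytope Q -> codim_le1 P ->
  (forall (w : 'I_d -> Z) (s : R), 0 < s ->
     forall n : nat, ehrhart (translate P w) s n <-> ehrhart (translate Q w) s n) ->
  forall x : pt d, P x -> Q x.
Proof.
move=> [[HlP HP] [MP HMP]] [[HlQ HQ] [MQ HMQ]] [p [Pp ind]] Hyp x Px.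
apply: NNPP => nQ.
have [h [hin hv]] : exists h, In h HlQ /\ h.2 < zdot h.1 x.
  apply: NNPP => H; apply: nQ; apply/HQ/Forall_In => h hin.
  apply: Rnot_lt_le => hl; apply: H; by exists h.
have A0 := Asum_ge0 h.1.
pose eps := (zdot h.1 x - h.2) / (Asum h.1 + 1).
have eps0 : 0 < eps by apply: Rdiv_lt_0_compat; lra.
have epsA : eps * Asum h.1 < zdot h.1 x - h.2.
  have e1 : eps * Asum h.1 = (zdot h.1 x - h.2) - eps by rewrite /eps; field; lra.
  lra.
have nQy : forall y, (forall i, Rabs (y i - x i) < eps) -> ~ Q y.
  move=> y hy Qy.
  have := (proj1 (Forall_In _ _) (proj1 (HQ y) Qy)) h hin; rewrite /= => hle.
  have hd : zdot h.1 x - zdot h.1 y = zdot h.1 (fun i => 1 * x i + (-1) * y i).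
    by rewrite zdot_lin; ring.
  have hb : Rabs (zdot h.1 (fun i => 1 * x i + (-1) * y i)) <= eps * Asum h.1.
    apply: zdot_bound => i.
    have -> : 1 * x i + -1 * y i = - (y i - x i) by ring.
    rewrite Rabs_Ropp; exact: Rlt_le (hy i).
  have := Rle_abs (zdot h.1 (fun i => 1 * x i + (-1) * y i)); lra.
pose R0 := Rabs MP + Rabs MQ + eps + 1.
have R00 : 0 < R0 by rewrite /R0; have := Rabs_pos MP; have := Rabs_pos MQ; lra.
have [y [Py [yx [w [z [Rr [hR hy]]]]]]] := density R0 HP HMP Pp ind Px eps0.
have Rr0 : 0 < Rr by lra.
pose s := / Rr.
have s0 : 0 < s by apply: Rinv_0_lt_compat.
have hQ0 : ehrhart (translate Q w) s O.
  exists nil; split; first by constructor.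
  split => // zl; split => //.
  move=> [hlen [x' [Qx' hx']]].
  have hq : forall i, x' i - IZR (w i) = y i.
    move=> i.
    have ex : x' i = Rr * IZR (List.nth i zl Z0).
      by rewrite hx' /s; field; lra.
    have hdiff : x' i - IZR (w i) - y i = Rr * IZR (Z.sub (List.nth i zl Z0) (z i)).
      by rewrite hy ex minus_IZR; ring.
    suff : Z.sub (List.nth i zl Z0) (z i) = Z0.
      by move=> e0; move: hdiff; rewrite e0 /=; lra.
    apply: IZR_small.
    have b1 := HMQ _ Qx' i; have b2 := HMP _ Px i; have b3 := yx i.
    have b4 : Rabs (x' i - IZR (w i) - y i) < Rr.
      have -> : x' i - IZR (w i) - y i = (x' i - IZR (w i)) + (- x i) + (- (y i - x i)) by ring.
      eapply Rle_lt_trans; first exact: Rabs_triang.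
      rewrite Rabs_Ropp.
      have := Rabs_triang (x' i - IZR (w i)) (- x i); rewrite Rabs_Ropp.
      have := Rabs_pos MP; have := Rabs_pos MQ; have := Rle_abs MP; have := Rle_abs MQ.
      rewrite /R0 in hR; lra.
    rewrite hdiff Rabs_mult (Rabs_pos_eq Rr) in b4; last lra.
    apply: (Rmult_lt_reg_l Rr) => //; lra.
  apply: (nQy y) => //.
  move: Qx'; rewrite /translate.
  have -> : (fun i => x' i - IZR (w i)) = y by apply: functional_extensionality => i; exact: hq.
  done.
have [l [_ [len Hin]]] := proj2 (Hyp w s s0 O) hQ0.
case: l len Hin => [|? ?] //= _ Hin.
pose zy := map z (enum 'I_d).
apply: (proj2 (Hin zy)); split.
  by rewrite llen_size /zy size_map size_enum_ord.
exists (fun i => Rr * IZR (z i)); split.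
  rewrite /translate.
  have -> : (fun i => Rr * IZR (z i) - IZR (w i)) = y.
    by apply: functional_extensionality => i; rewrite hy.
  exact: Py.
move=> i; rewrite lnth_nth /zy (nth_map i); last by rewrite size_enum_ord.
rewrite nth_ord_enum /s; field; lra.
Qed.

Theorem theorem4 (d : nat) (P Q : pt d -> Prop) :
  semi_rational_polytope P -> semi_rational_polytope Q ->
  codim_le1 P -> codim_le1 Q ->
  (forall (w : 'I_d -> Z) (s : R), 0 < s ->
     forall n : nat, ehrhart (translate P w) s n <-> ehrhart (translate Q w) s n) ->
  forall x : pt d, P x <-> Q x.
Proof.
move=> sP sQ cP cQ Hyp x; split.
  exact: half sP sQ cP Hyp x.
apply: (half sQ sP cQ) => w s s0 n; exact: iff_sym (Hyp w s s0 n).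
Qed.
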